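(* Let $\mathfrak g$ be of type $A_n$ and $J\subseteq I$. Then for $s\ge1$ $$\mathbf A_{s,J}=\bigl\{\{\alpha_{i_k,j_k}\}_{1\le k\le s}\in\mathbf A_s:\ i_k,j_k\notin J\text{ for all }k\bigr\}.$$ In particular $\#\mathbf A_{s,J}=\binom{n-\#J}{2s}+\binom{n-\#J}{2s-1}$ for $s\ge1$ and $\sum_{s\ge0}\#\mathbf A_{s,J}=2^{n-\#J}$.
   Context: Simple roots $\alpha_1,\dots,\alpha_n$ of $A_n$ numbered as in Bourbaki, $I=\{1,\dots,n\}$; $\alpha_{i,j}=\alpha_i+\dots+\alpha_j$ for $i\le j$, $\theta=\alpha_{1,n}$. For $\eta=\sum_i d_i(\eta)\alpha_i$, $R^+(J)=\{\alpha\in R^+:d_i(\alpha)=0\ \forall i\notin J\}$. A $J$-antichain is a subset $A\subseteq R^+$ with $A\cap R^+(J)=\emptyset$, distinct elements pairwise incomparable (order: $\lambda\le\mu$ iff $\mu-\lambda$ is a nonnegative integer combination of simple roots), and $\alpha-\alpha_j\notin R$ for $\alpha\in A$, $j\in J$. $\Phi(A)=\{\alpha\in R^+:\alpha\ge\beta$ for some $\beta\in A\}$; $A$ is abelian if $\beta_1+\beta_2\notin R$ for all $\beta_1,\beta_2\in\Phi(A)$. $\mathbf A_{s,J}$ is the set of abelian $J$-antichains with $s$ elements, $\mathbf A_{0,J}$ consists of the empty antichain, and $\mathbf A_s=\mathbf A_{s,\emptyset}$, which equals $\{\{\alpha_{i_k,j_k}\}_{1\le k\le s}: i_1<\dots<i_s\le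 j_1<\dots<j_s\}$. Convention: $\binom{m}{k}=0$ if $k>m$. *)

(* Defs.v *)
(* Root system of type A_n, n >= 1.
   Simple root alpha_{k+1} is indexed by k : 'I_n (0-based shift of Bourbaki numbering).
   An element eta = sum_i d_i(eta) alpha_i of the root lattice is represented by its
   coefficient vector {ffun 'I_n -> int}. A positive root alpha_{i,j} (i <= j) is
   represented by the pair (i,j) : 'I_n * 'I_n. *)
From HB Require Import structures.
From mathcomp Require Import all_boot all_order all_algebra.
Set Implicit Arguments. Unset Strict Implicit. Unset Printing Implicit Defensive.
Import Order.TTheory GRing.Theory Num.Theory intZmod.
Local Open Scope ring_scope.

Section A.
Variable n : nat.

Definition posroots : {set 'I_n * 'I_n} := [set p : 'I_n * 'I_n | (p.1 <= p.2)%N].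

Definition rv (p : 'I_n * 'I_n) : {ffun 'I_n -> int} :=
  [ffun k : 'I_n => (((p.1 <= k) && (k <= p.2))%N)%:Z].

Definition simple (j : 'I_n) : {ffun 'I_n -> int} := [ffun k : 'I_n => ((k == j) : nat)%:Z].

Definition vadd (u v : {ffun 'I_n -> int}) : {ffun 'I_n -> int} := [ffun k : 'I_n => (u k + v k)%R].
Definition vsub (u v : {ffun 'I_n -> int}) : {ffun 'I_n -> int} := [ffun k : 'I_n => (u k - v k)%R].
Definition vopp (u : {ffun 'I_n -> int}) : {ffun 'I_n -> int} := [ffun k : 'I_n => (- u k)%R].

Definition isRoot (v : {ffun 'I_n -> int}) : bool :=
  [exists p in posroots, (v == rv p) || (v == vopp (rv p))].

Definition rle (lam mu : {ffun 'I_n -> int}) : bool :=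
  [forall k : 'I_n, (0 <= mu k - lam k)%R].

Definition RplusJ (J : {set 'I_n}) : {set 'I_n * 'I_n} :=
  [set p in posroots | [forall i : 'I_n, (i \notin J) ==> (rv p i == 0%R)]].

Definition J_antichain (J : {set 'I_n}) (A : {set 'I_n * 'I_n}) : bool :=
  [&& A \subset posroots,
      [disjoint A & RplusJ J],
      [forall a in A, forall b in A, (a != b) ==> ~~ rle (rv a) (rv b)] &
      [forall a in A, forall j in J, ~~ isRoot (vsub (rv a) (simple j))]].

Definition Phi (A : {set 'I_n * 'I_n}) : {set 'I_n * 'I_n} :=
  [set p in posroots | [exists b in A, rle (rv b) (rv p)]].

Definition abelianA (A : {set 'I_n * 'I_n}) : bool :=
  [forall b1 in Phi A, forall b2 in Phi A, ~~ isRoot (vadd (rv b1) (rv b2))].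

Definition AsJ (s : nat) (J : {set 'I_n}) : {set {set 'I_n * 'I_n}} :=
  [set A | [&& J_antichain J A, abelianA A & #|A| == s]].

Definition As (s : nat) : {set {set 'I_n * 'I_n}} := AsJ s set0.

End A.

(* Main.v *)
Require Import Defs.
From HB Require Import structures.
From mathcomp Require Import all_boot all_order all_algebra.
From Stdlib Require Import Lia.
Set Implicit Arguments. Unset Strict Implicit. Unset Printing Implicit Defensive.
Import Order.TTheory GRing.Theory Num.Theory.

Lemma rvE n (p : 'I_n * 'I_n) k : rv p k = Posz (((p.1 <= k) && (k <= p.2))%N : nat).
Proof. by rewrite /rv ffunE. Qed.

Lemma root_in n (p : 'I_n * 'I_n) : p \in posroots n -> isRoot (rv p).
Proof. by move=> h; apply/existsP; exists p; rewrite h eqxx. Qed.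

Lemma vadd_inter n (a b : 'I_n * 'I_n) (k : 'I_n) :
  (a.1 <= k <= a.2)%N -> (b.1 <= k <= b.2)%N -> ~~ isRoot (vadd (rv a) (rv b)).
Proof.
move=> ha hb; apply/existsP => -[p /andP[_ /orP[] /eqP /ffunP /(_ k)]];
  rewrite /vadd /vopp !ffunE ha hb; case: (_ && _) => //.
Qed.

Lemma vadd_adj n (p q : 'I_n * 'I_n) : (p.1 <= p.2)%N -> (p.2).+1 = q.1 -> (q.1 <= q.2)%N ->
  vadd (rv p) (rv q) = rv (p.1, q.2).
Proof.
move=> h1 h2 h3; apply/ffunP => k; rewrite /vadd !ffunE /=.
case: (leqP k p.2) => hk.
- rewrite andbT; have -> : (q.1 <= k)%N = false by rewrite -h2 ltnNge hk.
  have hq : (k <= q.2)%N by rewrite (leq_trans hk) // (leq_trans _ h3) // -h2. rewrite hq andbT.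
  by case: (p.1 <= k)%N.
- rewrite andbF add0r; have -> : (q.1 <= k)%N by rewrite -h2.
  by rewrite (leq_trans h1 (ltnW hk)).
Qed.

Lemma vsub_root1 n (a : 'I_n * 'I_n) : (a.1 < a.2)%N -> isRoot (vsub (rv a) (simple a.1)).
Proof.
move=> h; have h' : (a.1.+1 < n)%N := leq_ltn_trans h (ltn_ord a.2).
apply/existsP; exists (Ordinal h', a.2); rewrite inE /= h /=; apply/orP; left.
apply/eqP/ffunP => k; rewrite !ffunE /= -val_eqE /=.
case: (ltngtP k a.1) => hk /=.
- by rewrite subr0.
- by rewrite subr0.
- by rewrite hk (ltnW h).
Qed.

Lemma leq_predE m k : (0 < m)%N -> (k <= m.-1)%N = (k < m)%N.
Proof. by case: m. Qed.

Lemma vsub_root2 n (a : 'I_n * 'I_n) : (a.1 < a.2)%N -> isRoot (vsub (rv a) (simple a.2)).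
Proof.
move=> h; have h' : (a.2.-1 < n)%N := leq_ltn_trans (leq_pred _) (ltn_ord a.2).
have p0 : (0 < a.2)%N by apply: leq_ltn_trans h.
apply/existsP; exists (a.1, Ordinal h'); rewrite inE /= leq_predE // h.
apply/orP; left.
apply/eqP/ffunP => k; rewrite !ffunE /= -val_eqE /= leq_predE //.
case: (ltngtP k a.2) => hk /=.
- by rewrite subr0 andbT.
- by rewrite subr0 andbF; case: (_ <= _)%N.
- by rewrite hk (ltnW h) /= subrr.
Qed.

Lemma vsub_notroot n (a : 'I_n * 'I_n) (j : 'I_n) : (a.1 <= a.2)%N ->
  j != a.1 -> j != a.2 -> ~~ isRoot (vsub (rv a) (simple j)).
Proof.
move=> hab h1 h2; apply/existsP => -[p /andP[_ /orP[] /eqP /ffunP e]].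
- have e1 := e a.1; have e2 := e a.2; have ej := e j.
  rewrite !ffunE leqnn hab eq_sym (negbTE h1) /= subr0 in e1.
  rewrite !ffunE leqnn hab eq_sym (negbTE h2) /= subr0 in e2.
  rewrite !ffunE eqxx /= in ej.
  have /andP[q1 q2] : (p.1 <= a.1 <= p.2)%N by move: e1; case: (_ && _).
  have /andP[q3 q4] : (p.1 <= a.2 <= p.2)%N by move: e2; case: (_ && _).
  move: ej; case: (leqP a.1 j) => hj1 /=; last by case: (_ && _).
  case: (leqP j a.2) => hj2 /=; last by case: (_ && _).
  by rewrite (leq_trans q1 hj1) (leq_trans hj2 q4).
- have e1 := e a.1.
  rewrite !ffunE leqnn hab eq_sym (negbTE h1) /= subr0 in e1.
  by move: e1; case: (_ && _).
Qed.

Lemma bint_le (b c : bool) : (0 <= Posz (b:nat) - Posz (c:nat))%R = (c ==> b).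
Proof. by case: b; case: c. Qed.

Lemma rv_le n (a b : 'I_n * 'I_n) : a \in posroots n ->
  rle (rv a) (rv b) = (b.1 <= a.1)%N && (a.2 <= b.2)%N.
Proof.
rewrite inE => hab; apply/forallP/andP.
- move=> h; have h1 := h a.1; have h2 := h a.2.
  move: h1 h2; rewrite !rvE !bint_le !leqnn hab /= => /andP[-> _] /andP[_ ->]; done.
- case=> h1 h2 k; rewrite !rvE bint_le; apply/implyP => /andP[h3 h4].
  by rewrite (leq_trans h1 h3) (leq_trans h4 h2).
Qed.
Lemma rv_at1 n (p : 'I_n * 'I_n) : p \in posroots n -> rv p p.1 = 1%R.
Proof. by rewrite inE => h; rewrite rvE leqnn h. Qed.
Lemma rv_at2 n (p : 'I_n * 'I_n) : p \in posroots n -> rv p p.2 = 1%R.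
Proof. by rewrite inE => h; rewrite rvE leqnn h. Qed.

Lemma RplusJ0 n : RplusJ (@set0 'I_n) = set0.
Proof.
apply/setP => p; rewrite !inE; apply/negbTE; apply/negP => /andP[pP /forallP /(_ p.1)].
by rewrite inE /= rvE leqnn pP.
Qed.

Lemma RplusJ_single n (J : {set 'I_n}) (p : 'I_n * 'I_n) :
  p.1 = p.2 :> nat -> p.1 \in J -> p \in RplusJ J.
Proof.
move=> e pJ; rewrite !inE e leqnn /=; apply/forallP => i; apply/implyP => iJ; rewrite rvE.
case: (leqP p.1 i) => // h1; case: (leqP i p.2) => //= h2.
have : i = p.1 by apply/val_inj; apply/eqP; rewrite eqn_leq h1 andbT; move: h2; rewrite -e.
by move=> ei; rewrite ei pJ in iJ.
Qed.

Lemma Jac_char n (J : {set 'I_n}) (A : {set 'I_n * 'I_n}) :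
  J_antichain J A = J_antichain set0 A && [forall p in A, (p.1 \notin J) && (p.2 \notin J)].
Proof.
rewrite /J_antichain RplusJ0; apply/idP/idP.
- case/and4P => sub dis anti roo; rewrite sub anti /=.
  rewrite -andbA; apply/and3P; split.
  + by rewrite -setI_eq0 setI0.
  + by apply/forall_inP => a _; apply/forall_inP => j; rewrite inE.
  + apply/forall_inP => p pA; have pP := subsetP sub p pA; rewrite inE in pP.
    have hr := forall_inP roo p pA.
    move: pP; rewrite leq_eqVlt => /orP[/eqP e|lt].
    * have nJ : p.1 \notin J.
        by apply/negP => pJ; have := disjointFr dis pA; rewrite (RplusJ_single e pJ).
      rewrite nJ /=; have -> : p.2 = p.1 by apply/val_inj.
      exact: nJ.
    * apply/andP; split; apply/negP => pJ.
      - by move: (forall_inP hr _ pJ); rewrite vsub_root1.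
      - by move: (forall_inP hr _ pJ); rewrite vsub_root2.
- case/andP => /and4P[sub _ anti _] ends; rewrite sub anti /=; apply/andP; split.
  + apply/pred0P => p /=; apply/negbTE/negP => /andP[pA].
    rewrite inE => /andP[_ /forall_inP /(_ p.1)].
    move: (forall_inP ends p pA) => /andP[-> _] /(_ isT) /eqP.
    by rewrite rv_at1 //; apply: (subsetP sub).
  + apply/forall_inP => p pA; apply/forall_inP => j jJ.
    move: (forall_inP ends p pA) => /andP[h1 h2].
    have pP := subsetP sub p pA; rewrite inE in pP.
    apply: vsub_notroot => //; apply/eqP => e; [move: h1 | move: h2]; by rewrite -e jJ.
Qed.
Lemma abelian_char n (A : {set 'I_n * 'I_n}) : A \subset posroots n ->
  abelianA A = [forall a in A, forall b in A, (a.1 <= b.2)%N].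
Proof.
move=> sub; apply/idP/idP.
- move=> ab; apply/forall_inP => a aA; apply/forall_inP => b bA.
  rewrite leqNgt; apply/negP => lt.
  have aP := subsetP sub a aA; have bP := subsetP sub b bA; rewrite inE in aP; rewrite inE in bP.
  have a0 : (0 < a.1)%N by apply: leq_ltn_trans lt.
  have h' : (a.1.-1 < n)%N := leq_ltn_trans (leq_pred _) (ltn_ord a.1).
  pose p := (b.1, Ordinal h').
  have pP : p \in posroots n by rewrite inE /= leq_predE // (leq_ltn_trans bP lt).
  have pPhi : p \in Phi A.
    rewrite inE pP /=; apply/existsP; exists b; rewrite bA rv_le ?inE //= leqnn /=.
    by rewrite leq_predE.
  have aPhi : a \in Phi A.
    rewrite inE (subsetP sub a aA) /=; apply/existsP; exists a; rewrite aA rv_le ?inE //= !leqnn //=.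
  move: (forall_inP (forall_inP ab p pPhi) a aPhi).
  rewrite vadd_adj //=; first by rewrite root_in // inE /= (leq_trans (ltnW (leq_ltn_trans bP lt)) aP).
  + by rewrite leq_predE // (leq_ltn_trans bP lt).
  + by rewrite prednK.
- move=> it; apply/forall_inP => p1 /setIdP[p1P /exists_inP[a1 a1A le1]].
  apply/forall_inP => p2 /setIdP[p2P /exists_inP[a2 a2A le2]].
  have a1P := subsetP sub a1 a1A; have a2P := subsetP sub a2 a2A.
  rewrite rv_le // in le1; rewrite rv_le // in le2.
  case/andP: le1 => l1 r1; case/andP: le2 => l2 r2.
  have c12 := forall_inP (forall_inP it a1 a1A) a2 a2A.
  have c21 := forall_inP (forall_inP it a2 a2A) a1 a1A.
  rewrite inE in a1P; rewrite inE in a2P.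
  case: (leqP a1.1 a2.1) => hk.
  + apply: (@vadd_inter _ _ _ a2.1).
    * by rewrite (leq_trans l1 hk) (leq_trans c21 r1).
    * by rewrite (leq_trans l2 (leqnn _)) (leq_trans (leq_trans a2P (leqnn _)) r2).
  + apply: (@vadd_inter _ _ _ a1.1).
    * by rewrite l1 (leq_trans a1P r1).
    * by rewrite (leq_trans l2 (ltnW hk)) (leq_trans c12 r2).
Qed.
Definition good n (A : {set 'I_n * 'I_n}) :=
  [&& A \subset posroots n,
      [forall a in A, forall b in A, (a != b) ==> ~~ ((b.1 <= a.1)%N && (a.2 <= b.2)%N)] &
      [forall a in A, forall b in A, (a.1 <= b.2)%N]].

Lemma As_good n s (A : {set 'I_n * 'I_n}) : (A \in As n s) = good A && (#|A| == s).
Proof.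
rewrite /As /AsJ inE /J_antichain /good RplusJ0.
case sub: (A \subset posroots n) => //=.
rewrite abelian_char //.
have -> : [disjoint A & set0] by rewrite -setI_eq0 setI0.
have -> : [forall a in A, forall j in set0, ~~ isRoot (vsub (rv a) (simple j))].
  by apply/forall_inP => a _; apply/forall_inP => j; rewrite inE.
rewrite andbT /=.
rewrite -andbA; congr (_ && _).
apply: eq_forallb_in => a aA; apply: eq_forallb_in => b bA.
by rewrite rv_le // (subsetP sub).
Qed.
Definition lo n (S : {set 'I_n}) (y : 'I_n) := #|[set z in S | (z <= y)%N]|.
Definition hi n (S : {set 'I_n}) (y : 'I_n) := #|[set z in S | (y <= z)%N]|.

Lemma lo_le n (S : {set 'I_n}) (y z : 'I_n) : (y <= z)%N -> (lo S y <= lo S z)%N.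
Proof.
move=> h; apply: subset_leq_card; apply/subsetP => w; rewrite !inE => /andP[-> /= h'].
exact: leq_trans h' h.
Qed.

Lemma lo_lt n (S : {set 'I_n}) (y z : 'I_n) : z \in S -> (y < z)%N -> (lo S y < lo S z)%N.
Proof.
move=> zS h; apply: proper_card; apply/properP; split.
  by apply: subset_trans (subxx _) _; apply/subsetP => w; rewrite !inE => /andP[-> /= h']; exact: leq_trans h' (ltnW h).
by exists z; rewrite !inE ?zS ?leqnn // -ltnNge.
Qed.

Lemma hi_lt n (S : {set 'I_n}) (y z : 'I_n) : y \in S -> (y < z)%N -> (hi S z < hi S y)%N.
Proof.
move=> yS h; apply: proper_card; apply/properP; split.
  by apply/subsetP => w; rewrite !inE => /andP[-> /= h']; exact: leq_trans (ltnW h) h'.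
by exists y; rewrite !inE ?yS ?leqnn // -ltnNge.
Qed.

Lemma lo_inj n (S : {set 'I_n}) (y z : 'I_n) : y \in S -> z \in S -> lo S y = lo S z -> y = z.
Proof.
move=> yS zS e; apply/val_inj; case: (ltngtP y z) => // h.
- by move: (lo_lt zS h); rewrite e ltnn.
- by move: (lo_lt yS h); rewrite e ltnn.
Qed.

Lemma lohi n (S : {set 'I_n}) (y : 'I_n) : y \in S -> lo S y + hi S y = #|S|.+1.
Proof.
move=> yS; rewrite /lo /hi -cardsUI -addn1.
have -> : [set z in S | (z <= y)%N] :|: [set z in S | (y <= z)%N] = S.
  apply/setP => z; rewrite !inE; case: (z \in S) => //=; exact: leq_total.
have -> : [set z in S | (z <= y)%N] :&: [set z in S | (y <= z)%N] = [set y].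
  apply/setP => z; rewrite !inE; apply/idP/idP.
  - by case/andP => /andP[_ h1] /andP[_ h2]; apply/eqP/val_inj/eqP; rewrite eqn_leq h1 h2.
  - by move/eqP => ->; rewrite yS leqnn.
by rewrite cards1.
Qed.

Lemma lo_pos n (S : {set 'I_n}) (y : 'I_n) : y \in S -> (0 < lo S y)%N.
Proof. by move=> yS; apply/card_gt0P; exists y; rewrite inE yS leqnn. Qed.

Lemma lo_leS n (S : {set 'I_n}) (y : 'I_n) : (lo S y <= #|S|)%N.
Proof. by apply: subset_leq_card; apply/subsetP => z; rewrite inE => /andP[]. Qed.

Lemma lo_exists n (S : {set 'I_n}) t : (0 < t)%N -> (t <= #|S|)%N -> exists2 y, y \in S & lo S y = t.
Proof.
move=> t0 tS.
have kn : (#|S| <= n)%N by rewrite -[X in (_ <= X)%N](card_ord n); exact: max_card.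
pose g (y : 'I_n) : 'I_n.+1 := inord (lo S y).
have gK y : g y = lo S y :> nat by rewrite inordK // ltnS (leq_trans (lo_leS S y)).
pose G := g @: S.
pose T := [set i : 'I_n.+1 | (0 < i <= #|S|)%N].
have GT : G \subset T.
  apply/subsetP => i /imsetP[y yS ->]; rewrite inE gK lo_pos //=; exact: lo_leS.
have cG : #|G| = #|S|.
  apply: card_in_imset => y z yS zS /(congr1 (@nat_of_ord _)); rewrite !gK; exact: lo_inj.
have cT : (#|T| <= #|S|)%N.
  have : T \subset [set (inord j.+1 : 'I_n.+1) | j : 'I_#|S|].
    apply/subsetP => i; rewrite inE => /andP[i0 iS].
    have hj : (i.-1 < #|S|)%N by rewrite -ltnS prednK.
    apply/imsetP; exists (Ordinal hj) => //=; apply/val_inj; rewrite /= inordK prednK //.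
  move/subset_leq_card => h; apply: leq_trans h _.
  by apply: leq_trans (leq_imset_card _ _) _; rewrite card_ord.
have GeT : G = T by apply/eqP; rewrite eqEcard GT cG.
have : (inord t : 'I_n.+1) \in T by rewrite inE inordK ?t0 ?tS // ltnS (leq_trans tS).
rewrite -GeT => /imsetP[y yS e]; exists y => //.
by rewrite -gK -e inordK // ltnS (leq_trans tS).
Qed.
Definition Fs n (S : {set 'I_n}) : {set 'I_n * 'I_n} :=
  [set p | [&& p.1 \in S, p.2 \in S & lo S p.2 == lo S p.1 + (#|S|)./2]].

Definition Es n (A : {set 'I_n * 'I_n}) : {set 'I_n} := [set p.1 | p in A] :|: [set p.2 | p in A].

Lemma FsP n (S : {set 'I_n}) p :
  reflect [/\ p.1 \in S, p.2 \in S & lo S p.2 = lo S p.1 + (#|S|)./2] (p \in Fs S).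
Proof. by rewrite inE; apply: (iffP and3P) => -[a b /eqP c]. Qed.

Lemma Fs_le n (S : {set 'I_n}) p : p \in Fs S -> (p.1 <= p.2)%N.
Proof.
case/FsP => h1 h2 e; rewrite leqNgt; apply/negP => lt.
by move: (lo_lt h1 lt); rewrite e ltnNge leq_addr.
Qed.

Lemma lo_set_card n (S : {set 'I_n}) t : (t <= #|S|)%N -> #|[set y in S | (lo S y <= t)%N]| = t.
Proof.
case: t => [_|t tS].
  apply/eqP; rewrite cards_eq0; apply/eqP/setP => y; rewrite !inE.
  by case yS: (y \in S) => //=; rewrite leqn0; apply/negbTE; rewrite -lt0n lo_pos.
have [z zS ez] := lo_exists (ltn0Sn t) tS.
rewrite -ez; transitivity #|[set y in S | (y <= z)%N]|; last by [].
apply: eq_card => y; rewrite !inE.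
case yS: (y \in S) => //=; case: (leqP y z) => h.
- by rewrite (lo_le S h).
- by apply/negbTE; rewrite -ltnNge (lo_lt yS h).
Qed.

Lemma half_le_sub k : (k - k./2 <= (k./2).+1)%N.
Proof. rewrite -{1}(odd_double_half k) -addnn addnA addnK -add1n leq_add2r; exact: leq_b1. Qed.

Lemma Fs_good n (S : {set 'I_n}) : good (Fs S).
Proof.
apply/and3P; split.
- by apply/subsetP => p pF; rewrite inE; exact: (Fs_le pF).
- apply/forall_inP => p pF; apply/forall_inP => q qF; apply/implyP => pq.
  apply/negP => /andP[h1 h2]; move/negP: pq; apply.
  case/FsP: pF => p1 p2 ep; case/FsP: qF => q1 q2 eq.
  have l1 := lo_le S h1; have l2 := lo_le S h2.
  have e1 : lo S q.1 = lo S p.1.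
    apply/eqP; rewrite eqn_leq l1 /= -(leq_add2r (#|S|)./2) -ep -eq //.
  have e2 : lo S p.2 = lo S q.2 by rewrite ep eq e1.
  have := lo_inj q1 p1 e1; have := lo_inj p2 q2 e2.
  by case: p {p1 p2 ep l1 l2 e1 e2 h1 h2} => a b; case: q {q1 q2 eq} => c d /= -> ->.
- apply/forall_inP => p pF; apply/forall_inP => q qF.
  case/FsP: pF => p1 p2 ep; case/FsP: qF => q1 q2 eq.
  rewrite leqNgt; apply/negP => lt.
  have := lo_lt p1 lt; apply/negP; rewrite -leqNgt eq.
  have := lo_leS S p.2; rewrite ep => h.
  have hb : (lo S p.1 <= odd #|S| + (#|S|)./2)%N.
    by rewrite -(leq_add2r (#|S|)./2) -addnA addnn odd_double_half.
  apply: leq_trans hb _; rewrite leq_add2r; exact: leq_trans (leq_b1 _) (lo_pos q1).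
Qed.

Lemma Fs_fst n (S : {set 'I_n}) :
  [set p.1 | p in Fs S] = [set y in S | (lo S y <= #|S| - (#|S|)./2)%N].
Proof.
apply/setP => y; rewrite inE; apply/imsetP/idP.
- case=> p /FsP[p1 p2 e] ->; rewrite p1 /= leq_psubRL ?lo_pos // addnC -e.
  exact: lo_leS.
- case/andP => yS; rewrite leq_psubRL ?lo_pos // addnC => h.
  have [z zS ez] := lo_exists (leq_trans (lo_pos yS) (leq_addr _ _)) h.
  by exists (y, z) => //; apply/FsP.
Qed.

Lemma Fs_card n (S : {set 'I_n}) : #|Fs S| = #|S| - (#|S|)./2.
Proof.
rewrite -(lo_set_card (leq_subr _ #|S|)) -Fs_fst card_in_imset //.
move=> p q /FsP[p1 p2 ep] /FsP[q1 q2 eq] e1.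
have e2 : p.2 = q.2 by apply: (lo_inj p2 q2); rewrite ep eq e1.
by case: p {p1 p2 ep} e1 e2 => a b; case: q {q1 q2 eq} => c d /= -> ->.
Qed.

Lemma EFs n (S : {set 'I_n}) : Es (Fs S) = S.
Proof.
apply/setP => y; rewrite /Es !inE; apply/idP/idP.
- by case/orP => /imsetP[p /FsP[p1 p2 _] ->].
- move=> yS; case: (leqP (lo S y) (#|S| - (#|S|)./2)) => h.
  + by apply/orP; left; rewrite Fs_fst inE yS.
  + apply/orP; right.
    have h2 : ((#|S|)./2 < lo S y)%N.
      by apply: leq_ltn_trans h; rewrite -{2}(odd_double_half #|S|) -addnn addnA addnK leq_addl.
    have t0 : (0 < lo S y - (#|S|)./2)%N by rewrite subn_gt0.
    have [w wS ew] := lo_exists t0 (leq_trans (leq_subr _ _) (lo_leS S y)).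
    apply/imsetP; exists (w, y) => //; apply/FsP; split => //.
    by rewrite ew subnK // ltnW.
Qed.

Lemma arith1 x y w k s c : x + y = k.+1 -> w + y = s.+1 -> k + c = s + s -> c <= 1 -> 
  x = w + k./2.
Proof.
move=> e1 e2 e3 hc.
have ho := odd_double_half k; have hb := leq_b1 (odd k).
move: ho hb; rewrite -addnn; move: (odd k : nat) (k./2) => o h ho hb.
move/ssrnat.leP: hc; move/ssrnat.leP: hb => hb hc.
move: e1 e2 e3 ho; rewrite -!plusE; lia.
Qed.


Lemma goodP n (A : {set 'I_n * 'I_n}) : good A ->
  [/\ A \subset posroots n,
      (forall a b, a \in A -> b \in A -> a != b -> ~~ ((b.1 <= a.1)%N && (a.2 <= b.2)%N)) &
      (forall a b, a \in A -> b \in A -> (a.1 <= b.2)%N)].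
Proof.
case/and3P => sub anti int; split => //.
- by move=> a b aA bA; apply/implyP; exact: (forall_inP (forall_inP anti a aA) b bA).
- by move=> a b aA bA; exact: (forall_inP (forall_inP int a aA) b bA).
Qed.

Lemma good_mono n (A : {set 'I_n * 'I_n}) a b : good A -> a \in A -> b \in A ->
  (a.1 <= b.1)%N = (a.2 <= b.2)%N.
Proof.
case/goodP => sub anti int aA bA.
case: (eqVneq a b) => [->|ab]; first by rewrite !leqnn.
apply/idP/idP => h; rewrite leqNgt; apply/negP => lt.
- by move: (anti b a bA aA (contra_neq (@esym _ _ _) ab)) ; rewrite h (ltnW lt).
- by move: (anti a b aA bA ab); rewrite h (ltnW lt).
Qed.

Lemma good_fst_inj n (A : {set 'I_n * 'I_n}) : good A -> {in A &, injective (fun p => p.1)}.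
Proof.
move=> gA a b aA bA e.
have h1 : (a.2 <= b.2)%N by rewrite -(good_mono gA aA bA) e.
have h2 : (b.2 <= a.2)%N by rewrite -(good_mono gA bA aA) e.
have e2 : a.2 = b.2 by apply/val_inj/eqP; rewrite eqn_leq h1 h2.
by case: a {aA h1 h2} e e2 => ? ?; case: b {bA} => ? ? /= -> ->.
Qed.

Lemma good_snd_inj n (A : {set 'I_n * 'I_n}) : good A -> {in A &, injective (fun p => p.2)}.
Proof.
move=> gA a b aA bA e.
have h1 : (a.1 <= b.1)%N by rewrite (good_mono gA aA bA) e.
have h2 : (b.1 <= a.1)%N by rewrite (good_mono gA bA aA) e.
have e2 : a.1 = b.1 by apply/val_inj/eqP; rewrite eqn_leq h1 h2.
by case: a {aA h1 h2} e e2 => ? ?; case: b {bA} => ? ? /= -> ->.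
Qed.

Lemma good_Es_card n (A : {set 'I_n * 'I_n}) : good A ->
  exists2 c, (c <= 1)%N & #|Es A| + c = #|A| + #|A|.
Proof.
move=> gA; have [sub anti int] := goodP gA.
exists #|[set p.1 | p in A] :&: [set p.2 | p in A]|; last first.
  by rewrite cardsUI !card_in_imset //; [exact: good_snd_inj | exact: good_fst_inj].
case: (set_0Vmem ([set p.1 | p in A] :&: [set p.2 | p in A])) => [->|[x]]; first by rewrite cards0.
rewrite inE => /andP[/imsetP[a aA ->] /imsetP[b bA eb]].
rewrite -(cards1 a.1); apply: subset_leq_card; apply/subsetP => y.
rewrite !inE => /andP[/imsetP[c cA ->] /imsetP[d dA ed]].
apply/eqP/val_inj/eqP; rewrite eqn_leq.
by rewrite eb (int _ _ cA bA) /= -eb ed (int _ _ aA dA).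
Qed.

Lemma good_lo n (A : {set 'I_n * 'I_n}) a : good A -> a \in A ->
  lo (Es A) a.1 = #|[set b in A | (b.1 <= a.1)%N]|.
Proof.
move=> gA aA; have [sub anti int] := goodP gA.
rewrite /lo; have -> : [set z in Es A | (z <= a.1)%N] = [set b.1 | b in [set b in A | (b.1 <= a.1)%N]].
  apply/setP => z; rewrite !inE; apply/idP/idP.
  - case/andP => /orP[] /imsetP[b bA ->] h.
    + by apply/imsetP; exists b; rewrite // inE bA.
    + apply/imsetP; exists a; rewrite ?inE ?aA ?leqnn //.
      by apply/val_inj/eqP; rewrite eqn_leq h int.
  - case/imsetP => b; rewrite inE => /andP[bA h] ->; rewrite h andbT.
    by apply/orP; left; apply/imsetP; exists b.
apply: card_in_imset => b c; rewrite !inE => /andP[bA _] /andP[cA _].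
exact: (good_fst_inj gA bA cA).
Qed.

Lemma good_hi n (A : {set 'I_n * 'I_n}) a : good A -> a \in A ->
  hi (Es A) a.2 = #|[set b in A | (a.2 <= b.2)%N]|.
Proof.
move=> gA aA; have [sub anti int] := goodP gA.
rewrite /hi; have -> : [set z in Es A | (a.2 <= z)%N] = [set b.2 | b in [set b in A | (a.2 <= b.2)%N]].
  apply/setP => z; rewrite !inE; apply/idP/idP.
  - case/andP => /orP[] /imsetP[b bA ->] h.
    + apply/imsetP; exists a; rewrite ?inE ?aA ?leqnn //.
      by apply/val_inj/eqP; rewrite eqn_leq h int.
    + by apply/imsetP; exists b; rewrite // inE bA.
  - case/imsetP => b; rewrite inE => /andP[bA h] ->; rewrite h andbT.
    by apply/orP; right; apply/imsetP; exists b.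
apply: card_in_imset => b c; rewrite !inE => /andP[bA _] /andP[cA _].
exact: (good_snd_inj gA bA cA).
Qed.

Lemma good_lohi n (A : {set 'I_n * 'I_n}) a : good A -> a \in A ->
  lo (Es A) a.1 + hi (Es A) a.2 = #|A|.+1.
Proof.
move=> gA aA; rewrite good_lo // good_hi // -cardsUI -addn1.
have -> : [set b in A | (b.1 <= a.1)%N] :|: [set b in A | (a.2 <= b.2)%N] = A.
  apply/setP => b; rewrite !inE; case bA: (b \in A) => //=.
  case: (leqP b.1 a.1) => //= h.
  by rewrite -(good_mono gA aA bA) ltnW.
have -> : [set b in A | (b.1 <= a.1)%N] :&: [set b in A | (a.2 <= b.2)%N] = [set a].
  apply/setP => b; rewrite !inE; apply/idP/idP.
  - case/andP => /andP[bA h1] /andP[_ h2]; apply/eqP.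
    apply: (good_snd_inj gA bA aA); apply/val_inj/eqP; rewrite eqn_leq h2 andbT.
    by rewrite -(good_mono gA bA aA).
  - by move/eqP => ->; rewrite aA !leqnn.
by rewrite cards1.
Qed.

Lemma arith2 k s c : k + c = s + s -> c <= 1 -> k - k./2 = s.
Proof.
move=> e3 hc.
have ho := odd_double_half k; have hb := leq_b1 (odd k).
move: ho hb; rewrite -addnn; move: (odd k : nat) (k./2) => o h ho hb.
move/ssrnat.leP: hc; move/ssrnat.leP: hb => hb hc.
move: e3 ho; rewrite -!plusE -!minusE; lia.
Qed.

Lemma FsEs n (A : {set 'I_n * 'I_n}) : good A -> Fs (Es A) = A.
Proof.
move=> gA; have [c hc ek] := good_Es_card gA.
have sub : A \subset Fs (Es A).
  apply/subsetP => a aA.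
  have a1 : a.1 \in Es A by rewrite inE; apply/orP; left; apply/imsetP; exists a.
  have a2 : a.2 \in Es A by rewrite inE; apply/orP; right; apply/imsetP; exists a.
  apply/FsP; split => //.
  exact: (arith1 (lohi a2) (good_lohi gA aA) ek hc).
by apply/esym/eqP; rewrite eqEcard sub Fs_card (arith2 ek hc) leqnn.
Qed.
Lemma binsum m M : (m < M)%N -> \sum_(i < M) 'C(m, i) = 2 ^ m.
Proof.
elim: M => // M IH; rewrite ltnS leq_eqVlt => /orP[/eqP <-|lt].
- by rewrite -[2]/(1 + 1) expnDn; apply: eq_bigr => i _; rewrite !exp1n !muln1.
- by rewrite big_ord_recr /= IH // bin_small // addn0.
Qed.

Lemma pairsum m K : 1 + \sum_(i < K) ('C(m, (i.+1).*2) + 'C(m, ((i.+1).*2).-1)) =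
  \sum_(i < (K.*2).+1) 'C(m, i).
Proof.
elim: K => [|K IH]; first by rewrite big_ord0 big_ord1 bin0.
rewrite big_ord_recr /= addnA IH doubleS /= !big_ord_recr /= -!addnA.
by rewrite [('C(m, _.+2) + _)]addnC.
Qed.

Lemma AsJ0 n (J : {set 'I_n}) : #|AsJ 0 J| = 1.
Proof.
apply/eqP/cards1P; exists set0; apply/setP => A; rewrite !inE cards_eq0.
case: (eqVneq A set0) => [->|]; last by rewrite !andbF.
rewrite andbT; apply/andP; split.
- rewrite /J_antichain sub0set -setI_eq0 set0I eqxx /=.
  by apply/andP; split; apply/forall_inP => a; rewrite inE.
- apply/forall_inP => p; rewrite inE => /andP[_ /exists_inP[b]]; by rewrite inE.
Qed.

Lemma part1 n (J : {set 'I_n}) s :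
  AsJ s J = [set A in As n s | [forall p in A, (p.1 \notin J) && (p.2 \notin J)]].
Proof.
apply/setP => A; rewrite /As /AsJ !inE Jac_char.
by case: (J_antichain set0 A); case: [forall p in A, _]; case: (abelianA A); case: (#|A| == s).
Qed.

Lemma part2 n (J : {set 'I_n}) s : (1 <= s)%N ->
  #|AsJ s J| = ('C(n - #|J|, s.*2) + 'C(n - #|J|, s.*2.-1))%N.
Proof.
move=> s1.
pose D1 := [set S : {set 'I_n} | (S \subset ~: J) & #|S| == s.*2].
pose D2 := [set S : {set 'I_n} | (S \subset ~: J) & #|S| == s.*2.-1].
have cK : #|~: J| = n - #|J| by rewrite -[X in X - _](card_ord n) -(cardsC J) addKn.
have memA A : A \in AsJ s J -> [/\ good A, #|A| = s & forall p, p \in A -> (p.1 \notin J) && (p.2 \notin J)].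
  rewrite part1 inE As_good => /andP[/andP[gA /eqP cA] /forall_inP e]; split => //.
have inj : {in AsJ s J &, injective (@Es n)}.
  move=> A B /memA[gA _ _] /memA[gB _ _] e.
  by rewrite -(FsEs gA) -(FsEs gB) e.
have img : (@Es n) @: AsJ s J = D1 :|: D2.
  apply/setP => S; rewrite !inE; apply/imsetP/idP.
  - case=> A /memA[gA cA eA] ->.
    have sK : Es A \subset ~: J.
      apply/subsetP => y; rewrite !inE => /orP[] /imsetP[p pA ->]; by case/andP: (eA p pA).
    rewrite sK /=; have [c hc ek] := good_Es_card gA; rewrite cA in ek.
    case: c hc ek => [|[|//]] _ ek.
    + by rewrite addn0 addnn in ek; rewrite ek eqxx.
    + by rewrite addn1 addnn in ek; rewrite -ek /= eqxx orbT.
  - move=> hS; exists (Fs S); last by rewrite EFs.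
    have [sK cS] : S \subset ~: J /\ ((#|S| == s.*2) || (#|S| == s.*2.-1)).
      by case/orP: hS => /andP[-> ->] //; rewrite orbT.
    rewrite part1 inE As_good Fs_good /=; apply/andP; split.
    + rewrite Fs_card; apply/eqP; case/orP: cS => /eqP e.
      * by apply: (arith2 (c := 0)) => //; rewrite addn0 e addnn.
      * by apply: (arith2 (c := 1)) => //; rewrite e addn1 prednK ?addnn // double_gt0.
    + apply/forall_inP => p /FsP[p1 p2 _].
      by rewrite -!in_setC (subsetP sK _ p1) (subsetP sK _ p2).
rewrite -(card_in_imset inj) img cardsU.
have -> : D1 :&: D2 = set0.
  apply/setP => S; rewrite !inE; apply/negbTE; apply/negP => /andP[/andP[_ /eqP ->] /andP[_]].
  have := double_gt0 s; rewrite s1; case: (s.*2) => // k _ /= /eqP; lia.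
by rewrite cards0 subn0 !cards_draws cK.
Qed.

Theorem mainTheorem7 (n : nat) (hn : (0 < n)%N) (J : {set 'I_n}) :
  (forall s : nat, (1 <= s)%N ->
     AsJ s J = [set A in As n s | [forall p in A, (p.1 \notin J) && (p.2 \notin J)]])
  /\ (forall s : nat, (1 <= s)%N ->
     #|AsJ s J| = ('C(n - #|J|, s.*2) + 'C(n - #|J|, s.*2.-1))%N)
  /\ (\sum_(s < #|{: 'I_n * 'I_n}|.+1) #|AsJ s J|)%N = 2 ^ (n - #|J|).
Proof.
split; first by move=> s _; exact: part1.
split; first exact: part2.
rewrite big_ord_recl /= AsJ0.
rewrite (eq_bigr (fun i : 'I_#|{: 'I_n * 'I_n}| => 'C(n - #|J|, (i.+1).*2) + 'C(n - #|J|, ((i.+1).*2).-1))); last first.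
  by move=> i _; rewrite part2.
rewrite pairsum binsum // ltnS card_prod card_ord.
apply: leq_trans (leq_subr _ _) _; rewrite -addnn (leq_trans _ (leq_addr _ _)) //.
by rewrite leq_pmull.
Qed.
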